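(* Let $\Sigma,\Gamma,\Delta$ be polynomial orbit-finite sets with $\Delta$ disjoint from $\Sigma$ and $\Gamma$. If $f:\Sigma^*\to\Gamma^*$ is a composition of primes then so are $\mathsf{map}_\Delta f$ and $\mathsf{sub}_\Delta f$; and if $f:(\Sigma+\Delta)^*\to\Gamma^*$ is a composition of primes then so is $\mathsf{map}'_\Delta f$.
   Context: Atoms $\mathbb A$ are a countably infinite set; polynomial orbit-finite sets are built from $\mathbb A$ and singletons by finite products and disjoint unions; equivariant means commuting with all bijections of $\mathbb A$. Compositions of primes: the smallest class containing (i) length-preserving homomorphisms lifting letterwise an equivariant function between polynomial orbit-finite sets, (ii) classical Mealy machine functions (finite alphabets and states, transition $Q\times\Sigma\to Q\times\Gamma$), (iii) atom propagation $(\mathbb A+\{\epsilon,\downarrow\})^*\to(\mathbb A+\bot)^*$ (position $i$ outputs the atom of position $j$ if $i$ is labelled $\downarrow$, $j<i$ carries an atom, and all positions strictly between are labelled $\epsilon$; otherwise $\bot$), closed under sequential composition and parallel composition $f_1|f_2:(\Sigma_1\times\Sigma_2)^*\to(\Gamma_1\times\Gamma_2)^*$. All such functions are length-preserving. Combinators, for $w_0,\dots,w_n\in\Sigma^*$ and $a_1,\dots,a_n\in\Delta$: $\mathsf{map}_\Delta f(w_0a_1w_1\cdots a_nw_n)=f(w_0)a_1f(w_1)\cdots a_nf(w_n)$; $\mathsf{sub}_\Delta f$ applies $f$ to $w_0w_1\cdots w_n$ and reinserts the separators $a_1,\dots,a_n$ at their original positions; $\mathsf{map}'_\Delta f(w_0a_1w_1\cdots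 a_nw_n)=f(w_0a_1)f(w_1a_2)\cdots f(w_{n-1}a_n)f(w_n)$. *)

(* Defs.v *)
From mathcomp Require Import all_boot.

Unset Strict Implicit.
Unset Printing Implicit Defensive.

(** Atoms: a countably infinite set, represented by nat. *)
Definition atom := nat.

(** Polynomial orbit-finite sets: syntax built from the atoms and singletons
    by finite products and finite disjoint unions (including the empty one). *)
Inductive pof : Type :=
| PAtom : pof
| PUnit : pof
| PEmpty : pof
| PProd : pof -> pof -> pof
| PSum : pof -> pof -> pof.

Fixpoint den (X : pof) : Type :=
  match X with
  | PAtom => atom
  | PUnit => unit
  | PEmpty => Empty_set
  | PProd A B => (den A * den B)%type
  | PSum A B => (den A + den B)%type
  end.

Fixpoint act (pi : atom -> atom) (X : pof) : den X -> den X :=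
  match X return den X -> den X with
  | PAtom => fun a => pi a
  | PUnit => fun u => u
  | PEmpty => fun e => e
  | PProd A B => fun p => (act pi A p.1, act pi B p.2)
  | PSum A B => fun s => match s with
                         | inl x => inl (act pi A x)
                         | inr y => inr (act pi B y)
                         end
  end.
Set Implicit Arguments.

Definition equivariant (X Y : pof) (h : den X -> den Y) : Prop :=
  forall pi : atom -> atom, bijective pi ->
    forall x, h (act pi X x) = act pi Y (h x).

Fixpoint atomfree (X : pof) : bool :=
  match X with
  | PAtom => false
  | PUnit | PEmpty => true
  | PProd A B | PSum A B => atomfree A && atomfree B
  end.

Fixpoint mealy_run (Q S G : Type) (delta : Q -> S -> Q * G) (q : Q) (w : seq S)
  : seq G :=
  match w with
  | [::] => [::]
  | x :: w' => (delta q x).2 :: mealy_run delta (delta q x).1 w'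
  end.

(** Atom propagation  (A + {eps, down})^* -> (A + bot)^*.
    Encoding: inl a = atom a, inr (inl tt) = eps, inr (inr tt) = down;
    output inl a = atom a, inr tt = bot. *)
Definition prop_in := PSum PAtom (PSum PUnit PUnit).
Definition prop_out := PSum PAtom PUnit.

Definition not_eps (x : den prop_in) : bool :=
  match x with inr (inl _) => false | _ => true end.

(** Output at a position with letter x, given the reversed prefix rp
    (positions j < i, nearest first).  The nearest position j < i that is
    not labelled eps is the unique candidate: all positions strictly between
    are then eps; the output is its atom if it carries one. *)
Definition prop_letter (rp : seq (den prop_in)) (x : den prop_in) : den prop_out :=
  match x with
  | inr (inr _) =>
      match [seq y <- rp | not_eps y] with
      | inl a :: _ => inl a
      | _ => inr tt
      end
  | _ => inr tt
  end.

Fixpoint prop_aux (rp : seq (den prop_in)) (w : seq (den prop_in))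
  : seq (den prop_out) :=
  match w with
  | [::] => [::]
  | x :: w' => prop_letter rp x :: prop_aux (x :: rp) w'
  end.

Definition atom_propagation (w : seq (den prop_in)) : seq (den prop_out) :=
  prop_aux [::] w.

Unset Implicit Arguments.
Inductive CompPrime : forall (X Y : pof), (seq (den X) -> seq (den Y)) -> Prop :=
| cp_hom : forall X Y (h : den X -> den Y),
    @equivariant X Y h -> CompPrime X Y (map h)
| cp_mealy : forall X Y (Q : finType) (q0 : Q) (delta : Q -> den X -> Q * den Y),
    atomfree X -> atomfree Y -> CompPrime X Y (@mealy_run Q (den X) (den Y) delta q0)
| cp_prop : CompPrime prop_in prop_out atom_propagation
| cp_seq : forall X Y Z f g,
    CompPrime X Y f -> CompPrime Y Z g -> CompPrime X Z (fun w => g (f w))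
| cp_par : forall X1 Y1 X2 Y2 f1 f2,
    CompPrime X1 Y1 f1 -> CompPrime X2 Y2 f2 ->
    CompPrime (PProd X1 X2) (PProd Y1 Y2)
      (fun w => zip (f1 (unzip1 w)) (f2 (unzip2 w)))
| cp_ext : forall X Y (f g : seq (den X) -> seq (den Y)),
    CompPrime X Y f -> (forall w, f w = g w) -> CompPrime X Y g.
Set Implicit Arguments.

(** Combinators.  Words over Sigma u Delta (Delta disjoint) are words over
    the disjoint union Sigma + Delta; separators are the inr letters. *)
Definition getL (A B : Type) (x : A + B) : option A :=
  match x with inl a => Some a | inr _ => None end.
Definition getR (A B : Type) (x : A + B) : option B :=
  match x with inl _ => None | inr b => Some b end.

(** chunks (w0 a1 w1 ... an wn) = [:: w0 a1; w1 a2; ...; w(n-1) an; wn]. *)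
Fixpoint chunks (A B : Type) (w : seq (A + B)) : seq (seq (A + B)) :=
  match w with
  | [::] => [:: [::]]
  | inl x :: w' => let c := chunks w' in (inl x :: head [::] c) :: behead c
  | inr y :: w' => [:: inr y] :: chunks w'
  end.

(** map_Delta f (w0 a1 w1 ... an wn) = f(w0) a1 f(w1) ... an f(wn). *)
Definition mapD (S G D : pof) (f : seq (den S) -> seq (den G))
  (w : seq (den (PSum S D))) : seq (den (PSum G D)) :=
  flatten [seq map inl (f (pmap (@getL _ _) c)) ++ map inr (pmap (@getR _ _) c)
          | c <- chunks w].

Fixpoint reinsert (S G D : Type) (w : seq (S + D)) (v : seq G) : seq (G + D) :=
  match w with
  | [::] => [::]
  | inl _ :: w' => match v with
                   | g :: v' => inl g :: reinsert w' v'
                   | [::] => [::]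
                   end
  | inr a :: w' => inr a :: reinsert w' v
  end.

(** sub_Delta f applies f to w0 w1 ... wn and reinserts a1 ... an. *)
Definition subD (S G D : pof) (f : seq (den S) -> seq (den G))
  (w : seq (den (PSum S D))) : seq (den (PSum G D)) :=
  reinsert w (f (pmap (@getL _ _) w)).

(** map'_Delta f (w0 a1 ... an wn) = f(w0 a1) f(w1 a2) ... f(w(n-1) an) f(wn). *)
Definition mapD' (S G D : pof) (f : seq (den (PSum S D)) -> seq (den G))
  (w : seq (den (PSum S D))) : seq (den G) :=
  flatten [seq f c | c <- chunks w].

Arguments mapD {S G} D f w.
Arguments subD {S G} D f w.
Arguments mapD' {S G} D f w.
Arguments CompPrime X Y f.

(* Main.v *)
Require Import Defs.
From mathcomp Require Import all_boot.
From Stdlib Require Import Lia.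
From mathcomp Require Import zify.

Set Implicit Arguments.
Unset Strict Implicit.
Unset Printing Implicit Defensive.

Definition Bf := PSum PUnit PUnit.
Definition fl (b : unit + unit) : bool := if b is inr _ then true else false.
Definition unfl (A : Type) (u : seq (A * (unit + unit))) : bool :=
  all (fun p => ~~ fl p.2) u.
Definition spres (A C : Type) (f : seq A -> seq C) := forall w, size (f w) = size w.

Lemma size_mealy Q S G (d : Q -> S -> Q * G) q w : size (mealy_run d q w) = size w.
Proof. by elim: w q => //= x w IH q; rewrite IH. Qed.
Lemma size_prop rp w : size (prop_aux rp w) = size w.
Proof. by elim: w rp => //= x w IH rp; rewrite IH. Qed.
Lemma size_CP X Y f : CompPrime X Y f -> forall w, size (f w) = size w.
Proof.
elim=> {X Y f}.
- by move=> X Y h _ w; rewrite size_map.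
- by move=> X Y Q q0 d _ _ w; rewrite size_mealy.
- by move=> w; rewrite /atom_propagation size_prop.
- by move=> X Y Z f g _ Hf _ Hg w; rewrite Hg Hf.
- by move=> X1 Y1 X2 Y2 f1 f2 _ H1 _ H2 w; rewrite size_zip H1 H2 !size_map minnn.
- by move=> X Y f g _ Hf E w; rewrite -E.
Qed.

Lemma act_af pi X : atomfree X -> forall x, act pi X x = x.
Proof.
elim: X => //= [A IA B IB|A IA B IB] /andP[hA hB].
- by case=> a b /=; rewrite IA // IB.
- by case=> [a|b] /=; rewrite ?IA ?IB.
Qed.

Section Reins.
Variables (A C E K : Type).
Lemma size_reinsert (c : seq (A + K)) (v : seq C) :
  size v = size (pmap (@getL _ _) c) -> size (reinsert c v) = size c.
Proof.
elim: c v => [|[a|k] c IH] [|y v] //= H; try (simpl in H; lia); rewrite IH //; simpl in H; lia.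
Qed.
Lemma pmap_reinsert (c : seq (A + K)) (v : seq C) :
  size v = size (pmap (@getL _ _) c) -> pmap (@getL _ _) (reinsert c v) = v.
Proof.
elim: c v => [|[a|k] c IH] [|y v] //= H; try (simpl in H; lia); rewrite IH //; simpl in H; lia.
Qed.
Lemma reinsert_reinsert (c : seq (A + K)) (v : seq C) (v' : seq E) :
  size v = size (pmap (@getL _ _) c) -> reinsert (reinsert c v) v' = reinsert c v'.
Proof.
elim: c v v' => [|[a|k] c IH] [|y v] v' //= H.
- case: v' => [|y' v'] //=; rewrite IH //; simpl in H; lia.
- by rewrite IH.
- by rewrite IH.
Qed.
End Reins.

Definition Rz (A C K : Type) (f : seq A -> seq C) (c : seq ((A + K) * (unit + unit)))
  : seq ((C + K) * (unit + unit)) :=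
  zip (reinsert (unzip1 c) (f (pmap (@getL _ _) (unzip1 c)))) (unzip2 c).

Fixpoint chunksB (T : Type) (w : seq (T * (unit + unit))) : seq (seq (T * (unit + unit))) :=
  match w with
  | [::] => [:: [::]]
  | p :: w' => if fl p.2 then [:: p] :: chunksB w'
               else let c := chunksB w' in (p :: head [::] c) :: behead c
  end.

Definition Gen (A C K : Type) (f : seq A -> seq C) (w : seq ((A + K) * (unit + unit))) :=
  flatten (map (Rz f) (chunksB w)).

Section GenL.
Variables (A C D K : Type).

Lemma chunksB_unfl (T : Type) (u : seq (T * (unit + unit))) : unfl u -> chunksB u = [:: u].
Proof. elim: u => //= [[x b] u IH] /andP[/negbTE -> /IH ->] //. Qed.

Lemma chunksB_cat (T : Type) (u v : seq (T * (unit + unit))) x :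
  unfl u -> chunksB (u ++ (x, inr tt) :: v) = rcons u (x, inr tt) :: chunksB v.
Proof. elim: u => //= [[y b] u IH] /andP[/negbTE -> /IH ->] //. Qed.

Lemma Gen_unfl (f : seq A -> seq C) (u : seq ((A + K) * (unit + unit))) :
  unfl u -> Gen f u = Rz f u.
Proof. by move=> H; rewrite /Gen chunksB_unfl //= cats0. Qed.

Lemma Gen_cat (f : seq A -> seq C) (u v : seq ((A + K) * (unit + unit))) x :
  unfl u -> Gen f (u ++ (x, inr tt) :: v) = Rz f (rcons u (x, inr tt)) ++ Gen f v.
Proof. by move=> H; rewrite /Gen chunksB_cat. Qed.

Lemma decomp (T : Type) (w : seq (T * (unit + unit))) :
  unfl w \/ exists u x v, unfl u /\ w = u ++ (x, inr tt) :: v.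
Proof.
elim: w => [|[x [[]|[]]] w [H|[u [y [v [Hu ->]]]]]]; first by left.
- by left.
- by right; exists ((x, inl tt) :: u), y, v.
- by right; exists [::], x, w.
- by right; exists [::], x, (u ++ (y, inr tt) :: v).
Qed.

Lemma gen_ind (T : Type) (P : seq (T * (unit + unit)) -> Prop) :
  (forall u, unfl u -> P u) ->
  (forall u x v, unfl u -> P v -> P (u ++ (x, inr tt) :: v)) -> forall w, P w.
Proof.
move=> H1 H2 w; have [n] := ubnP (size w); elim: n w => // n IH w Hw.
case: (decomp w) => [/H1 //|[u [x [v [Hu Ew]]]]]; subst w.
apply: H2 => //; apply: IH; move: Hw; rewrite size_cat /=; lia.
Qed.

Lemma unfl_map (T T' : Type) (g : T * (unit + unit) -> T' * (unit + unit)) u :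
  (forall p, (g p).2 = p.2) -> unfl (map g u) = unfl u.
Proof. by move=> H; elim: u => //= p u ->; rewrite H. Qed.

Lemma unfl_unzip2 (T T' : Type) (s : seq (T * (unit + unit))) (t : seq (T' * (unit + unit))) :
  unzip2 s = unzip2 t -> unfl s = unfl t.
Proof. by elim: s t => [|p s IH] [|q t] //= [E1 E2]; rewrite E1 (IH _ E2). Qed.

Lemma size_Rz (f : seq A -> seq C) (c : seq ((A + K) * (unit + unit))) :
  spres f -> size (Rz f c) = size c.
Proof.
move=> Hf; rewrite /Rz size_zip size_reinsert ?Hf ?size_map ?minnn //.
Qed.

Lemma unzip2_Rz (f : seq A -> seq C) c : spres f -> unzip2 (@Rz A C K f c) = unzip2 c.
Proof. by move=> Hf; rewrite /Rz unzip2_zip // size_reinsert ?Hf // !size_map. Qed.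

Lemma unzip1_Rz (f : seq A -> seq C) c : spres f ->
  unzip1 (@Rz A C K f c) = reinsert (unzip1 c) (f (pmap (@getL _ _) (unzip1 c))).
Proof. by move=> Hf; rewrite /Rz unzip1_zip // size_reinsert ?Hf // !size_map. Qed.

Lemma Rz_comp (f : seq A -> seq C) (g : seq C -> seq D) (c : seq ((A + K) * (unit + unit))) :
  spres f -> Rz g (Rz f c) = Rz (fun w => g (f w)) c.
Proof.
move=> Hf; rewrite /Rz unzip1_Rz // unzip2_Rz // pmap_reinsert ?Hf //.
by rewrite reinsert_reinsert ?Hf.
Qed.

Lemma RzR (f : seq A -> seq C) (k : K) b c : Rz f ((inr k, b) :: c) = (inr k, b) :: Rz f c.
Proof. by []. Qed.

Lemma RzL (f g : seq A -> seq C) x y b (c : seq ((A + K) * (unit + unit))) :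
  (forall l, f (x :: l) = y :: g l) -> Rz f ((inl x, b) :: c) = (inl y, b) :: Rz g c.
Proof. by move=> H; rewrite /Rz /= H. Qed.

Lemma Rz_nil (f : seq A -> seq C) : Rz f ([::] : seq ((A + K) * (unit + unit))) = [::].
Proof. by []. Qed.

End GenL.

Definition GT (X K : pof) := PProd (PSum X K) Bf.

Lemma unzip_pair (T T' : Type) (g : T -> T') (w : seq T) :
  unzip1 (map (fun p => (g p, p)) w) = map g w /\ unzip2 (map (fun p => (g p, p)) w) = w.
Proof. by elim: w => //= p w [-> ->]. Qed.

Lemma map_id' (T : Type) (w : seq T) : map (fun x => x) w = w.
Proof. by elim: w => //= x w ->. Qed.

Lemma Gen_hom K X Y (h : den X -> den Y) : equivariant h ->
  CompPrime (GT X K) (GT Y K) (Gen (K := den K) (map h)).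
Proof.
move=> Hh.
pose hh (p : den (GT X K)) : den (GT Y K) :=
  (match p.1 with inl x => inl (h x) | inr k => inr k end, p.2).
have Ehh : equivariant hh.
  by move=> pi bij [[x|k] b] //=; rewrite /hh /= Hh.
apply: (cp_ext _ _ (map hh)); first exact: cp_hom.
have Rzh : forall c, Rz (K := den K) (map h) c = map hh c.
  elim=> [|[[x|k] b] c IH] //.
  - by rewrite (@RzL _ _ _ _ (map h) x (h x)) // IH.
  - by rewrite RzR IH.
move=> w; symmetry; move: w.
apply: gen_ind => [u Hu|u x v Hu IH].
- by rewrite Gen_unfl // Rzh.
- by rewrite Gen_cat // Rzh IH map_cat map_rcons cat_rcons.
Qed.

Section MealyCase.
Variables (K X Y : pof) (Q : finType) (q0 : Q) (d : Q -> den X -> Q * den Y).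
Hypotheses (hX : atomfree X) (hY : atomfree Y).

Definition mstrip (p : den (GT X K)) : den (GT X PUnit) :=
  (match p.1 with inl x => inl x | inr _ => inr tt end, p.2).
Definition md (q : Q) (p : den (GT X PUnit)) : Q * den (GT Y PUnit) :=
  match p.1 with
  | inl x => (if fl p.2 then q0 else (d q x).1, (inl (d q x).2, p.2))
  | inr _ => (if fl p.2 then q0 else q, (inr tt, p.2))
  end.
Definition mmg (p : den (PProd (GT Y PUnit) (GT X K))) : den (GT Y K) :=
  match p with
  | ((inl y, b), _) => (inl y, b)
  | ((inr _, b), (inr k, _)) => (inr k, b)
  | ((inr _, b), (inl x, _)) => (inl (d q0 x).2, b)
  end.

Lemma M1 (u : seq (den (GT X K))) q : unfl u ->
  map mmg (zip (mealy_run md q (map mstrip u)) u) = Rz (mealy_run d q) u.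
Proof.
elim: u q => [|[[x|k] b] u IH] q //= /andP[hb hu].
- rewrite (RzL (g := mealy_run d (d q x).1) (y := (d q x).2)) //.
  by rewrite /md /= (negbTE hb) IH.
- by rewrite RzR /md /= (negbTE hb) IH.
Qed.

Lemma M2 (u v : seq (den (GT X K))) x q : unfl u ->
  map mmg (zip (mealy_run md q (map mstrip (u ++ (x, inr tt) :: v))) (u ++ (x, inr tt) :: v))
  = Rz (mealy_run d q) (rcons u (x, inr tt)) ++ map mmg (zip (mealy_run md q0 (map mstrip v)) v).
Proof.
elim: u q => [|[[y|k] b] u IH] q.
- by case: x => [s|k] _ //=.
- move=> /andP[hb hu].
  rewrite [rcons _ _]/= (RzL (g := mealy_run d (d q y).1) (y := (d q y).2)) //.
  rewrite (cat_cons (inl (d q y).2, b)) -IH //.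
  by rewrite /md /= (negbTE hb).
- move=> /andP[hb hu].
  by rewrite [rcons _ _]/= RzR (cat_cons (inr k, b)) -IH // /md /= (negbTE hb).
Qed.

Definition mpre (p : den (GT X K)) : den (PProd (GT X PUnit) (GT X K)) := (mstrip p, p).

Lemma Gen_mealy : CompPrime (GT X K) (GT Y K) (Gen (K := den K) (mealy_run d q0)).
Proof.
have Hpre : equivariant mpre.
  by move=> pi _ [[x|k] b].
have Hmg : equivariant mmg.
  move=> pi _ [[[y|[]] b] [[x|k] b']] //=.
  by rewrite !act_af.
have afX : atomfree (GT X PUnit) by rewrite /= hX.
have afY : atomfree (GT Y PUnit) by rewrite /= hY.
have H := cp_seq _ _ _ _ _ (cp_hom _ _ _ Hpre)
  (cp_seq _ _ _ _ _ (cp_par _ _ _ _ _ _ (cp_mealy _ _ Q q0 md afX afY)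
     (cp_hom _ _ (fun x => x) (fun _ _ _ => erefl))) (cp_hom _ _ _ Hmg)).
apply: (cp_ext _ _ _ _ H) => w /=.
have [-> ->] := unzip_pair mstrip w.
rewrite map_id'; move: w; apply: gen_ind => [u Hu|u x v Hu IH].
- by rewrite Gen_unfl // M1.
- by rewrite Gen_cat // M2 // IH.
Qed.
End MealyCase.

Definition hdp (rp : seq (den prop_in)) : option atom :=
  match [seq y <- rp | not_eps y] with inl a :: _ => Some a | _ => None end.

Lemma prop_letter_down rp u : prop_letter rp (inr (inr u)) = if hdp rp is Some a then inl a else inr tt.
Proof. by rewrite /prop_letter /hdp; case: [seq _ <- _ | _] => [|[a|[[]|[]]] l]. Qed.

Lemma hdp_cons x rp : hdp (x :: rp) =
  match x with inl a => Some a | inr (inl _) => hdp rp | inr (inr _) => None end.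
Proof. by case: x => [a|[[]|[]]]. Qed.

Lemma prop_aux_hd rp1 rp2 w : hdp rp1 = hdp rp2 -> prop_aux rp1 w = prop_aux rp2 w.
Proof.
elim: w rp1 rp2 => //= x w IH rp1 rp2 H.
congr cons.
- by case: x => [a|[[]|[]]] //; rewrite !prop_letter_down H.
- by apply: IH; rewrite !hdp_cons H.
Qed.

Lemma pl_eq rp rq s : hdp rp = hdp rq ->
  (match s with inr (inr _) => prop_letter rp s | _ => inr tt end) = prop_letter rq s.
Proof. by case: s => [a|[[]|[]]] // H; rewrite !prop_letter_down H. Qed.

Section PropCase.
Variable K : pof.

Definition ptr (p : den (GT prop_in K)) : den prop_in :=
  if fl p.2 then inr (inr tt) else match p.1 with inl s => s | inr _ => inr (inl tt) end.
Definition pmg (p : den (PProd prop_out (GT prop_in K))) : den (GT prop_out K) :=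
  match p.2.1 with
  | inl s => (inl (match s with inr (inr _) => p.1 | _ => inr tt end), p.2.2)
  | inr k => (inr k, p.2.2)
  end.
Definition ppre (p : den (GT prop_in K)) : den (PProd prop_in (GT prop_in K)) := (ptr p, p).

Lemma P1 (u : seq (den (GT prop_in K))) rp rq : unfl u -> hdp rp = hdp rq ->
  map pmg (zip (prop_aux rp (map ptr u)) u) = Rz (prop_aux rq) u.
Proof.
elim: u rp rq => [|[[s|k] b] u IH] rp rq //= /andP[hb hu] H.
- rewrite (RzL (g := prop_aux (s :: rq)) (y := prop_letter rq s)) //.
  rewrite /ptr /= (negbTE hb) -(IH (s :: rp)) //; last by rewrite !hdp_cons H.
  congr cons; rewrite /pmg /=; congr (_, _); by rewrite (pl_eq _ H).
- rewrite RzR /ptr /= (negbTE hb) -(IH (inr (inl tt) :: rp)) //.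
Qed.

Lemma P2 (u v : seq (den (GT prop_in K))) x rp rq : unfl u -> hdp rp = hdp rq ->
  map pmg (zip (prop_aux rp (map ptr (u ++ (x, inr tt) :: v))) (u ++ (x, inr tt) :: v))
  = Rz (prop_aux rq) (rcons u (x, inr tt)) ++ map pmg (zip (prop_aux [::] (map ptr v)) v).
Proof.
elim: u rp rq => [|[[s|k] b] u IH] rp rq.
- move=> _ H /=; rewrite (@prop_aux_hd (inr (inr tt) :: rp) [::]) //.
  case: x => [s|k] //=; congr cons; rewrite /pmg /=.
  have := prop_letter_down rp tt; rewrite /prop_letter => ->.
  case: s => [a|[[]|[]]] //.
  by have := prop_letter_down rq tt; rewrite /prop_letter => ->; rewrite H.
- move=> /andP[hb hu] H.
  rewrite [rcons _ _]/= (RzL (g := prop_aux (s :: rq)) (y := prop_letter rq s)) //.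
  rewrite (cat_cons (inl (prop_letter rq s), b)) -(IH (s :: rp)) //; last by rewrite !hdp_cons H.
  rewrite /= /ptr /= (negbTE hb); congr cons; rewrite /pmg /=; congr (_, _).
  by rewrite (pl_eq _ H).
- move=> /andP[hb hu] H.
  rewrite [rcons _ _]/= RzR (cat_cons (inr k, b)) -(IH (inr (inl tt) :: rp)) //.
  by rewrite /= /ptr /= (negbTE hb).
Qed.

Lemma Gen_prop : CompPrime (GT prop_in K) (GT prop_out K) (Gen (K := den K) atom_propagation).
Proof.
have Hpre : equivariant ppre.
  by move=> pi _ [[[a|[[]|[]]]|k] [[]|[]]].
have Hmg : equivariant pmg.
  by move=> pi _ [o [[[a|[[]|[]]]|k] b]].
have H := cp_seq _ _ _ _ _ (cp_hom _ _ _ Hpre)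
  (cp_seq _ _ _ _ _ (cp_par _ _ _ _ _ _ cp_prop
     (cp_hom _ _ (fun x => x) (fun _ _ _ => erefl))) (cp_hom _ _ _ Hmg)).
apply: (cp_ext _ _ _ _ H) => w /=.
have [-> ->] := unzip_pair ptr w.
rewrite map_id' /atom_propagation; move: w; apply: gen_ind => [u Hu|u x v Hu IH].
- by rewrite Gen_unfl // (P1 (rq := [::])) .
- by rewrite Gen_cat // (@P2 u v x [::] [::]) // IH.
Qed.
End PropCase.

Lemma rcons_decomp (T T' : Type) (s : seq (T * (unit + unit))) (u : seq (T' * (unit + unit))) x :
  unfl u -> unzip2 s = unzip2 (rcons u (x, inr tt)) ->
  exists u' y, s = rcons u' (y, inr tt) /\ unfl u'.
Proof.
move=> Hu; case/lastP: s => [|s' [y b]]; rewrite /unzip2 !map_rcons.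
- by move=> /(congr1 size); rewrite size_rcons.
- move=> /rcons_inj [E1 E2]; simpl in E2; subst b.
  by exists s', y; split => //; rewrite (unfl_unzip2 E1).
Qed.

Section SeqCase.
Variables (A C D K : Type).
Lemma Gen_seq (f : seq A -> seq C) (g : seq C -> seq D) : spres f ->
  forall w : seq ((A + K) * (unit + unit)), Gen g (Gen f w) = Gen (fun w => g (f w)) w.
Proof.
move=> Hf; apply: gen_ind => [u Hu|u x v Hu IH].
- have Hu' : unfl (Rz f u) by rewrite (unfl_unzip2 (unzip2_Rz _ Hf)).
  by rewrite !Gen_unfl // Rz_comp.
- rewrite !Gen_cat //.
  have [u' [y [E Hu']]] := rcons_decomp Hu (unzip2_Rz (rcons u (x, inr tt)) Hf).
  by rewrite E cat_rcons Gen_cat // -E Rz_comp // IH.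
Qed.
End SeqCase.

Lemma Gen_cat' (A C K : Type) (f : seq A -> seq C) (u v : seq ((A + K) * (unit + unit))) p :
  unfl u -> fl p.2 -> Gen f (u ++ p :: v) = Rz f (rcons u p) ++ Gen f v.
Proof. by case: p => y [[]|[]] // Hu _; apply: Gen_cat. Qed.

Section ParCase.
Variables (A1 A2 C1 C2 K : Type).
Definition sp1 (p : (A1 * A2 + K) * (unit + unit)) : (A1 + K) * (unit + unit) :=
  (match p.1 with inl x => inl x.1 | inr k => inr k end, p.2).
Definition sp2 (p : (A1 * A2 + K) * (unit + unit)) : (A2 + K) * (unit + unit) :=
  (match p.1 with inl x => inl x.2 | inr k => inr k end, p.2).
Definition pmerge (p : ((C1 + K) * (unit + unit)) * ((C2 + K) * (unit + unit)))
  : (C1 * C2 + K) * (unit + unit) :=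
  match p with
  | ((inl y1, b), (inl y2, _)) => (inl (y1, y2), b)
  | ((inr k, b), _) => (inr k, b)
  | ((inl _, b), (inr k, _)) => (inr k, b)
  end.

Lemma pmap_sp1 c : pmap (@getL _ _) (unzip1 (map sp1 c)) = unzip1 (pmap (@getL _ _) (unzip1 c)).
Proof. by elim: c => [|[[x|k] b] c IH] //=; rewrite IH. Qed.
Lemma pmap_sp2 c : pmap (@getL _ _) (unzip1 (map sp2 c)) = unzip2 (pmap (@getL _ _) (unzip1 c)).
Proof. by elim: c => [|[[x|k] b] c IH] //=; rewrite IH. Qed.

Lemma reinsert_zip c (v1 : seq C1) (v2 : seq C2) :
  size v1 = size (pmap (@getL _ _) (unzip1 c)) -> size v2 = size (pmap (@getL _ _) (unzip1 c)) ->
  zip (reinsert (unzip1 c) (zip v1 v2)) (unzip2 c) =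
  map pmerge (zip (zip (reinsert (unzip1 (map sp1 c)) v1) (unzip2 (map sp1 c)))
                  (zip (reinsert (unzip1 (map sp2 c)) v2) (unzip2 (map sp2 c)))).
Proof.
elim: c v1 v2 => [|[[x|k] b] c IH] [|y1 v1] [|y2 v2] //= H1 H2; try lia.
all: rewrite -IH //; try lia.
Qed.

Lemma Rz_par (f1 : seq A1 -> seq C1) (f2 : seq A2 -> seq C2) c : spres f1 -> spres f2 ->
  Rz (fun w => zip (f1 (unzip1 w)) (f2 (unzip2 w))) c =
  map pmerge (zip (Rz f1 (map sp1 c)) (Rz f2 (map sp2 c))).
Proof.
move=> H1 H2; rewrite /Rz pmap_sp1 pmap_sp2 reinsert_zip //.
- by rewrite H1 size_map.
- by rewrite H2 size_map.
Qed.

Lemma Gen_par (f1 : seq A1 -> seq C1) (f2 : seq A2 -> seq C2) : spres f1 -> spres f2 ->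
  forall w, Gen (fun w => zip (f1 (unzip1 w)) (f2 (unzip2 w))) w =
  map pmerge (zip (Gen f1 (map sp1 w)) (Gen f2 (map sp2 w))).
Proof.
move=> H1 H2; apply: gen_ind => [u Hu|u x v Hu IH].
- rewrite !Gen_unfl ?Rz_par // unfl_map //.
- rewrite map_cat map_cat /= !Gen_cat' ?unfl_map // IH.
  rewrite -!map_rcons zip_cat ?map_cat ?Rz_par //.
  by rewrite !size_Rz // !size_map.
Qed.
End ParCase.

Definition psplit (X1 X2 K : pof) (p : den (GT (PProd X1 X2) K)) : den (PProd (GT X1 K) (GT X2 K)) :=
  (@sp1 (den X1) (den X2) (den K) p, @sp2 (den X1) (den X2) (den K) p).

Definition pmergeD (Y1 Y2 K : pof) (p : den (PProd (GT Y1 K) (GT Y2 K))) : den (GT (PProd Y1 Y2) K) :=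
  @pmerge (den Y1) (den Y2) (den K) p.

Lemma GenCP K X Y f : CompPrime X Y f -> CompPrime (GT X K) (GT Y K) (Gen (K := den K) f).
Proof.
elim=> {X Y f}.
- by move=> X Y h Hh; apply: Gen_hom.
- by move=> X Y Q q0 d hX hY; apply: Gen_mealy.
- exact: Gen_prop.
- move=> X Y Z f g Hf IHf Hg IHg.
  apply: (cp_ext _ _ _ _ (cp_seq _ _ _ _ _ IHf IHg)) => w.
  by rewrite /= Gen_seq //; apply: size_CP Hf.
- move=> X1 Y1 X2 Y2 f1 f2 H1 IH1 H2 IH2.
  have Hs : equivariant (@psplit X1 X2 K) by move=> pi _ [[[x1 x2]|k] b].
  have Hm : equivariant (@pmergeD Y1 Y2 K).
    by move=> pi _ [[[y1|k1] b1] [[y2|k2] b2]].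
  have H := cp_seq _ _ _ _ _ (cp_hom _ _ _ Hs)
    (cp_seq _ _ _ _ _ (cp_par _ _ _ _ _ _ IH1 IH2) (cp_hom _ _ _ Hm)).
  apply: (cp_ext _ _ _ _ H) => w /=.
  rewrite Gen_par; try by move=> ?; apply: size_CP.
  have -> : unzip1 (map (@psplit X1 X2 K) w) = map (@sp1 (den X1) (den X2) (den K)) w by elim: w => //= p w ->.
  have -> : unzip2 (map (@psplit X1 X2 K) w) = map (@sp2 (den X1) (den X2) (den K)) w by elim: w => //= p w ->.
  by [].
- move=> X Y f g H IH E.
  apply: (cp_ext _ _ _ _ IH) => w; rewrite /Gen; congr flatten.
  by apply: eq_map => c; rewrite /Rz E.
Qed.

Section Final.
Variables (S G D : pof).

Definition spre (x : den (PSum S D)) : den (GT S D) := (x, inl tt).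
Definition spost (p : den (GT G D)) : den (PSum G D) := p.1.

Lemma subD_CP f : CompPrime S G f -> CompPrime (PSum S D) (PSum G D) (subD D f).
Proof.
move=> Hf.
have H := cp_seq _ _ _ _ _ (cp_hom _ _ spre (fun _ _ _ => erefl))
  (cp_seq _ _ _ _ _ (GenCP D Hf) (cp_hom _ _ spost (fun _ _ _ => erefl))).
apply: (cp_ext _ _ _ _ H) => w /=.
rewrite Gen_unfl; last by elim: w.
rewrite /Rz /subD.
have -> : unzip1 (map spre w) = w by elim: w => //= x w ->.
have := size_CP Hf (pmap (@getL _ _) w).
move: (f _) => v; elim: w v => [|[s|d] w IH] [|y v] //= Hv; try lia.
- by rewrite IH //; lia.
- by rewrite IH.
- by rewrite IH.
Qed.

Definition mpre' (x : den (PSum S D)) : den (GT (PSum S D) PEmpty) :=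
  (inl x, if x is inr _ then inr tt else inl tt).
Definition mpost' (p : den (GT G PEmpty)) : den G :=
  match p.1 with inl y => y | inr e => match e with end end.

Lemma chunksB_pre w : chunksB (map mpre' w) = map (map mpre') (chunks w).
Proof.
elim: w => //= [[s|d] w IH] /=; rewrite IH //.
by case: (chunks w).
Qed.

Lemma mapD'_CP f : CompPrime (PSum S D) G f -> CompPrime (PSum S D) G (mapD' D f).
Proof.
move=> Hf.
have He1 : equivariant mpre' by move=> pi _ [s|d].
have He2 : equivariant mpost' by move=> pi _ [[y|[]] b].
have H := cp_seq _ _ _ _ _ (cp_hom _ _ _ He1)
  (cp_seq _ _ _ _ _ (GenCP PEmpty Hf) (cp_hom _ _ _ He2)).
apply: (cp_ext _ _ _ _ H) => w /=.
rewrite /Gen chunksB_pre /mapD' map_flatten -!map_comp.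
congr flatten; apply: eq_map => c /=.
have E : pmap (@getL _ _) (unzip1 (map mpre' c)) = c by elim: c => //= x c ->.
rewrite /Rz E.
have := size_CP Hf c.
move: (f c) => v; elim: c v {E} => [|x c IH] [|y v] //= Hv; try lia.
by rewrite IH //; case: Hv.
Qed.

Fixpoint allP (T : Type) (P : T -> Prop) (s : seq T) : Prop :=
  match s with [::] => True | x :: s' => P x /\ allP P s' end.

Definition good (A C B : Type) (c : seq (A + B)) :=
  forall v : seq C, size v = size (pmap (@getL _ _) c) ->
    reinsert c v = map inl v ++ map inr (pmap (@getR _ _) c).

Lemma chunks_good (A C B : Type) (w : seq (A + B)) : allP (@good A C B) (chunks w).
Proof.
have g0 : @good A C B [::] by case.
elim: w => [|[s|d] w IH] /=.
- by split.
- move: IH; case: (chunks w) => [|c0 cs] /=.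
  + move=> _; split => //; by case=> [|y [|z v]].
  + move=> [Hc Hcs]; split => //; case=> [|y v] //= Hv; by rewrite Hc //; case: Hv.
- split => //; by case.
Qed.

Lemma mapD_eq f : CompPrime S G f -> forall w, mapD' D (subD D f) w = mapD D f w.
Proof.
move=> Hf w; rewrite /mapD' /mapD; congr flatten.
have := @chunks_good (den S) (den G) (den D) w.
elim: (chunks w) => //= c cs IH [Hc Hcs]; rewrite IH // /subD Hc //.
by rewrite (size_CP Hf).
Qed.

End Final.

Theorem mainTheorem12 (S G D : pof) :
  (forall f : seq (den S) -> seq (den G),
      CompPrime S G f ->
      CompPrime (PSum S D) (PSum G D) (mapD D f) /\
      CompPrime (PSum S D) (PSum G D) (subD D f)) /\
  (forall f : seq (den (PSum S D)) -> seq (den G),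
      CompPrime (PSum S D) G f ->
      CompPrime (PSum S D) G (mapD' D f)).
Proof.
split.
- move=> f Hf; split; last exact: subD_CP.
  apply: (cp_ext _ _ _ _ (mapD'_CP (subD_CP D Hf))).
  exact: mapD_eq.
- move=> f Hf; exact: mapD'_CP.
Qed.
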